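(* For every $n\in\mathbb{N}$, every valuation $\mathcal V$, every nonempty chain $c_s$ over $[n]$ and all formulas $\varphi,\psi$: (i) $\varphi^{\mathcal V}\vdash_{(n)}(\neg_{c_s}\varphi)^{\mathcal V}$; (ii) $\varphi^{\mathcal V},\psi^{\mathcal V}\vdash_{(n)}(\varphi\to_{(n)}\psi)^{\mathcal V}$.
   Context: Fix $n\in\mathbb{N}$, $n\ge 1$, and write $[n]=\{1,\dots,n\}$. Chains: a chain over $[n]$ is a finite sequence of distinct elements of $[n]$; chains with the same length and the same symbols are identified, so a chain is effectively a subset of $[n]$. $c_k$ denotes a chain with $k$ symbols, $\epsilon$ the empty chain, and $(n)$ the chain consisting of all symbols of $[n]$. For chains $c,d$: the concatenation $c\cdot d$ is the chain of symbols occurring in $c$ or in $d$; the coconcatenation $c\otimes d$ is the chain of symbols occurring in exactly one of $c,d$; $d$ is a subchain of $c$ if every symbol of $d$ is a symbol of $c$. The complementary chain $c'_{n-k}$ of $c_k$ is the chain of the symbols of $[n]$ not occurring in $c_k$. Language of $\mathbf{CPN}_n$: a countable set $P_n$ of propositional letters; constants $\perp_c$ for each chain $c$ over $[n]$ with $1\le |c|\le n-1$, and constants $\perp_{(n)}$ (contradiction) and $\top_{(n)}$ (truth); a unary connective $\neg_c$ for each nonempty chain $c$ over $[n]$ ($\neg_{(n)}$ is the strong negation; the $\neg_c$ with $|c|\le n-1$ are weak negations); a binary connective $\to_{(n)}$. Formulas: propositional letters and constants are formulas; if $\varphi,\psi$ are formulas then so are $\neg_c\varphi$ and $(\varphi\to_{(n)}\psi)$.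 Conventions: $\neg_\epsilon\varphi:=\varphi$, $\perp_\epsilon:=\top_{(n)}$, and $\perp_c$ for $c=(n)$ means $\perp_{(n)}$. Abbreviations: $\varphi\wedge_{(n)}\psi:=\neg_{(n)}(\varphi\to_{(n)}\neg_{(n)}\psi)$, $\varphi\vee_{(n)}\psi:=\neg_{(n)}\varphi\to_{(n)}\psi$, $\varphi\leftrightarrow_{(n)}\psi:=(\varphi\to_{(n)}\psi)\wedge_{(n)}(\psi\to_{(n)}\varphi)$. Axioms of $\mathbf{CPN}_n$, for all formulas $\varphi,\psi,\chi$ and all nonempty chains $c_k,c_r$ over $[n]$: (A1) $\varphi\to_{(n)}(\psi\to_{(n)}\varphi)$; (A2) $(\varphi\to_{(n)}(\psi\to_{(n)}\chi))\to_{(n)}((\varphi\to_{(n)}\psi)\to_{(n)}(\varphi\to_{(n)}\chi))$; (A3) $(\neg_{(n)}\psi\to_{(n)}\neg_{(n)}\varphi)\to_{(n)}((\neg_{(n)}\psi\to_{(n)}\varphi)\to_{(n)}\psi)$; (A4) $\varphi\to_{(n)}(\perp_{c_k}\to_{(n)}\neg_{c_k}\varphi)$; (A5) $\neg_{c_k}\neg_{c_r}\varphi\leftrightarrow_{(n)}\neg_{c_k\otimes c_r}\varphi$; (A6) $\neg_{c_k}\perp_{c_r}\leftrightarrow_{(n)}\perp_{c_k\otimes c_r}$; (A7) $\perp_{c_k}\to_{(n)}\perp_{c_r}$, whenever $c_r$ is a subchain of $c_k$. The only rule of inference is modus ponens (from $\varphi$ and $\varphi\to_{(n)}\psi$ infer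 $\psi$). For a set $\Sigma$ of formulas, $\Sigma\vdash_{(n)}\varphi$ means there is a finite sequence of formulas ending with $\varphi$, each of which is an axiom, a member of $\Sigma$, or obtained from two earlier members by modus ponens; $\vdash_{(n)}\varphi$ means $\emptyset\vdash_{(n)}\varphi$. Semantics: for each $i\in[n]$ there is a world $\mathcal M_i=\{T_i,F_i\}$ (pairwise disjoint sets). A valuation $\mathcal V$ assigns to each propositional letter $p$ and each $i\in[n]$ a value $v_i(p)\in\mathcal M_i$ (independently for different $i$). It extends to all formulas, for each $i$, by: $\bar v_i(p)=v_i(p)$ for letters; $\bar v_i(\perp_c)=F_i$ if $i$ is a symbol of $c$ and $T_i$ otherwise (so $\bar v_i(\perp_{(n)})=F_i$ and $\bar v_i(\top_{(n)})=T_i$); $\bar v_i(\neg_c\varphi)=\bar v_i(\varphi)$ if $i$ is not a symbol of $c$, and the opposite value ($T_i\leftrightarrow F_i$) if $i$ is a symbol of $c$; $\bar v_i(\varphi\to_{(n)}\psi)=F_i$ iff $\bar v_i(\varphi)=T_i$ and $\bar v_i(\psi)=F_i$, otherwise $T_i$ (hence $\wedge_{(n)},\vee_{(n)}$ behave classically in each world). Write $\bar{\mathcal V}(\varphi)=(\bar v_1(\varphi),\dots,\bar v_n(\varphi))$. A formula $\varphi$ is a tautology, written $\models_{(n)}\varphi$, iff $\bar{\mathcal V}(\varphi)=(T_1,\dots,T_n)$ for every valuation $\mathcal V$. Given a valuation $\mathcal V$ and a chain $c$ over $[n]$ (possibly empty), a formula $\varphi$ is $c$-contingent (under $\mathcal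 V$) if $\bar v_i(\varphi)=F_i$ for every symbol $i$ of $c$ and $\bar v_i(\varphi)=T_i$ for every $i\in[n]$ not in $c$. Every formula is $c$-contingent for exactly one chain $c$, and one sets $\varphi^{\mathcal V}:=\neg_c\varphi$ for that $c$ (so $\varphi^{\mathcal V}=\varphi$ when $\bar{\mathcal V}(\varphi)=(T_1,\dots,T_n)$). *)

(* Defs.v *)
From mathcomp Require Import all_boot.
Set Implicit Arguments. Unset Strict Implicit. Unset Printing Implicit Defensive.

(* Chains over [n] are identified with subsets of [n] = 'I_n. *)
Definition chain (n : nat) := {set 'I_n}.
Definition nechain (n : nat) := {c : {set 'I_n} | c != set0}.

Definition cocat n (c d : {set 'I_n}) : {set 'I_n} := (c :\: d) :|: (d :\: c).

(* FBot c is the constant ⊥_c; with the paper's conventions,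
   FBot set0 = ⊤_(n) and FBot [set: 'I_n] = ⊥_(n). *)
Inductive formula (n : nat) : Type :=
| FVar : nat -> formula n
| FBot : {set 'I_n} -> formula n
| FNeg : nechain n -> formula n -> formula n
| FImp : formula n -> formula n -> formula n.

Arguments FVar {n}.
Arguments FBot {n}.
Arguments FNeg {n}.
Arguments FImp {n}.

(* ¬_c φ for an arbitrary chain, with the convention ¬_ε φ := φ *)
Definition negc n (c : {set 'I_n}) (phi : formula n) : formula n :=
  match insub c : option (nechain n) with
  | Some c' => FNeg c' phi
  | None => phi
  end.

Definition sneg n (phi : formula n) := negc [set: 'I_n] phi.
Definition fand n (phi psi : formula n) := sneg (FImp phi (sneg psi)).
Definition for_ n (phi psi : formula n) := FImp (sneg phi) psi.
Definition fiff n (phi psi : formula n) := fand (FImp phi psi) (FImp psi phi).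

Inductive axiom (n : nat) : formula n -> Prop :=
| A1 (phi psi : formula n) : axiom (FImp phi (FImp psi phi))
| A2 (phi psi chi : formula n) :
    axiom (FImp (FImp phi (FImp psi chi))
                (FImp (FImp phi psi) (FImp phi chi)))
| A3 (phi psi : formula n) :
    axiom (FImp (FImp (sneg psi) (sneg phi))
                (FImp (FImp (sneg psi) phi) psi))
| A4 (phi : formula n) (ck : {set 'I_n}) : ck != set0 ->
    axiom (FImp phi (FImp (FBot ck) (negc ck phi)))
| A5 (phi : formula n) (ck cr : {set 'I_n}) : ck != set0 -> cr != set0 ->
    axiom (fiff (negc ck (negc cr phi)) (negc (cocat ck cr) phi))
| A6 (ck cr : {set 'I_n}) : ck != set0 -> cr != set0 ->
    axiom (fiff (negc ck (FBot cr)) (FBot (cocat ck cr)))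
| A7 (ck cr : {set 'I_n}) : ck != set0 -> cr != set0 -> cr \subset ck ->
    axiom (FImp (FBot ck) (FBot cr)).

Inductive derives (n : nat) (Sigma : formula n -> Prop) : formula n -> Prop :=
| DAx phi : axiom phi -> derives Sigma phi
| DHyp phi : Sigma phi -> derives Sigma phi
| DMP phi psi : derives Sigma phi -> derives Sigma (FImp phi psi) ->
    derives Sigma psi.

(* Semantics: T_i = true, F_i = false; a valuation gives independent
   values for each letter and each world i. *)
Definition valuation (n : nat) := nat -> 'I_n -> bool.

Fixpoint eval n (v : valuation n) (i : 'I_n) (phi : formula n) : bool :=
  match phi with
  | FVar p => v p i
  | FBot c => i \notin c
  | FNeg c psi => if i \in val c then ~~ eval v i psi else eval v i psi
  | FImp psi chi => eval v i psi ==> eval v i chi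
  end.

Definition contingent n (v : valuation n) (c : {set 'I_n}) (phi : formula n) :=
  forall i : 'I_n, (i \in c -> eval v i phi = false) /\
                   (i \notin c -> eval v i phi = true).

Definition cont_chain n (v : valuation n) (phi : formula n) : {set 'I_n} :=
  [set i | ~~ eval v i phi].

Definition vpow n (v : valuation n) (phi : formula n) : formula n :=
  negc (cont_chain v phi) phi.

Lemma cont_chain_contingent n (v : valuation n) phi :
  contingent v (cont_chain v phi) phi.
Proof.
by move=> i; rewrite /cont_chain inE; split; case: (eval v i phi).
Qed.

(* Main.v *)
Require Import Defs.
From mathcomp Require Import all_boot.
Set Implicit Arguments. Unset Strict Implicit. Unset Printing Implicit Defensive.

Definition ext n (S : formula n -> Prop) (A : formula n) := fun x => S x \/ x = A.

Lemma mp n (S : formula n -> Prop) p q :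
  derives S (FImp p q) -> derives S p -> derives S q.
Proof. by move=> h1 h2; apply: DMP h2 h1. Qed.

Lemma a1 n (S : formula n -> Prop) p q : derives S (FImp p (FImp q p)).
Proof. by apply: DAx; apply: A1. Qed.
Lemma a2 n (S : formula n -> Prop) p q r :
  derives S (FImp (FImp p (FImp q r)) (FImp (FImp p q) (FImp p r))).
Proof. by apply: DAx; apply: A2. Qed.
Lemma a3 n (S : formula n -> Prop) p q :
  derives S (FImp (FImp (sneg q) (sneg p)) (FImp (FImp (sneg q) p) q)).
Proof. by apply: DAx; apply: A3. Qed.

Lemma wk n (S S' : formula n -> Prop) p :
  (forall x, S x -> S' x) -> derives S p -> derives S' p.
Proof.
move=> h; elim=> [x ax|x /h sx|x y _ h1 _ h2].
- exact: DAx. - exact: DHyp. - exact: DMP h1 h2.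
Qed.

Lemma hyp n S (A : formula n) : derives (ext S A) A.
Proof. by apply: DHyp; right. Qed.
Lemma wk1 n S (A p : formula n) : derives S p -> derives (ext S A) p.
Proof. by apply: wk => x; left. Qed.

Lemma imp_refl n S (p : formula n) : derives S (FImp p p).
Proof.
exact: mp (mp (a2 S p (FImp p p) p) (a1 S p (FImp p p))) (a1 S p p).
Qed.

Lemma dt n S (A B : formula n) : derives (ext S A) B -> derives S (FImp A B).
Proof.
elim=> [x ax|x [sx|->]|x y _ h1 _ h2].
- exact: mp (a1 S x A) (DAx S ax).
- exact: mp (a1 S x A) (@DHyp _ S x sx).
- exact: imp_refl.
- exact: mp (mp (a2 S A x y) h2) h1.
Qed.

Lemma dneg_e n S (B : formula n) : derives S (sneg (sneg B)) -> derives S B.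
Proof.
move=> h; exact: mp (mp (a3 S (sneg B) B) (mp (a1 S _ _) h)) (imp_refl S _).
Qed.

Lemma dneg_i n S (B : formula n) : derives S B -> derives S (sneg (sneg B)).
Proof.
move=> h.
exact: mp (mp (a3 S B (sneg (sneg B))) (dt (dneg_e (hyp S _)))) (mp (a1 S _ _) h).
Qed.

Lemma efq n S (A B : formula n) : derives S (sneg A) -> derives S A -> derives S B.
Proof.
move=> h1 h2; exact: mp (mp (a3 S A B) (mp (a1 S _ _) h1)) (mp (a1 S _ _) h2).
Qed.

Lemma cntr n S (A B : formula n) :
  derives S (FImp A B) -> derives S (FImp (sneg B) (sneg A)).
Proof.
move=> h; apply: dt.
apply: mp (mp (a3 _ B (sneg A)) (mp (a1 _ _ _) (hyp S _))) _.
apply: wk1; apply: dt; exact: mp (wk1 _ h) (dneg_e (hyp S _)).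
Qed.

Lemma cases n S (A B : formula n) :
  derives S (FImp A B) -> derives S (FImp (sneg A) B) -> derives S B.
Proof.
move=> h1 h2; exact: mp (mp (a3 S (sneg A) B) (cntr h2)) (cntr h1).
Qed.

Lemma negimp n S (A B : formula n) :
  derives S A -> derives S (sneg B) -> derives S (sneg (FImp A B)).
Proof.
move=> h1 h2; apply: mp (cntr _) h2.
apply: dt; exact: mp (hyp S _) (wk1 _ h1).
Qed.

Lemma and_l n S (P Q : formula n) : derives S (sneg (FImp P (sneg Q))) -> derives S P.
Proof.
move=> h; apply: dneg_e; apply: mp (cntr _) h.
apply: dt; apply: dt; exact: efq (wk1 _ (hyp S _)) (hyp _ _).
Qed.

Lemma and_r n S (P Q : formula n) : derives S (sneg (FImp P (sneg Q))) -> derives S Q.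
Proof. move=> h; apply: dneg_e; apply: mp (cntr (a1 _ _ _)) h. Qed.

Lemma iff1 n S (X Y : formula n) : derives S (fiff X Y) -> derives S (FImp X Y).
Proof. exact: and_l. Qed.
Lemma iff2 n S (X Y : formula n) : derives S (fiff X Y) -> derives S (FImp Y X).
Proof. exact: and_r. Qed.

Lemma negc0 n (p : formula n) : negc set0 p = p.
Proof. by rewrite /negc insubF // eqxx. Qed.

Lemma eval_negc n (v : valuation n) i c p :
  eval v i (negc c p) = (i \in c) (+) eval v i p.
Proof.
rewrite /negc; case: insubP => [c' _ <-|].
  by rewrite /=; case: (i \in val c'); case: (eval v i p).
by rewrite negbK => /eqP ->; rewrite in_set0.
Qed.

Lemma setT_n0 n (i0 : 'I_n) : [set: 'I_n] != set0.
Proof. by apply/set0Pn; exists i0; rewrite inE. Qed.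

Lemma cocatK n (c : {set 'I_n}) : cocat c c = set0.
Proof. by apply/setP => j; rewrite !inE; case: (j \in c). Qed.

Lemma cocat0r n (c : {set 'I_n}) : cocat c set0 = c.
Proof. by apply/setP => j; rewrite !inE; case: (j \in c). Qed.

Lemma cocatTC n (c : {set 'I_n}) : cocat setT c = ~: c.
Proof. by apply/setP => j; rewrite !inE; case: (j \in c). Qed.

Lemma cocatCT n (c : {set 'I_n}) : cocat (~: c) c = setT.
Proof. by apply/setP => j; rewrite !inE; case: (j \in c). Qed.

Lemma a4' n S (p : formula n) c : derives S (FImp p (FImp (FBot c) (negc c p))).
Proof.
case: (eqVneq c set0) => [->|cn]; first by rewrite negc0; exact: a1.
by apply: DAx; apply: A4.
Qed.

Lemma exfalso n (i0 : 'I_n) S (B : formula n) :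
  derives S (FBot setT) -> derives S B.
Proof.
move=> h.
have h1 : derives S (FImp B (sneg B)) by apply: dt; exact: mp (mp (a4' _ _ _) (hyp _ _)) (wk1 _ h).
have h2 : derives S (FImp (sneg B) (sneg (sneg B))).
  by apply: dt; exact: mp (mp (a4' _ _ _) (hyp _ _)) (wk1 _ h).
apply: cases (imp_refl _ _) _.
apply: dt; apply: dneg_e; exact: mp (wk1 _ h2) (hyp _ _).
Qed.

Lemma top n (i0 : 'I_n) S : derives S (FBot (n:=n) set0).
Proof.
have hT := setT_n0 i0.
have := iff1 (DAx S (A6 hT hT)); rewrite cocatK => h; apply: (mp h).
apply: (@cases _ _ (FBot setT)); last exact: imp_refl.
apply: dt; exact: (exfalso i0 _ (@hyp _ S (FBot setT))).
Qed.

Lemma bot_sub n (i0 : 'I_n) S (c d : {set 'I_n}) :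
  d \subset c -> derives S (FBot c) -> derives S (FBot d).
Proof.
move=> sdc h; case: (eqVneq d set0) => [->|dn]; first exact: top i0 _.
have cn : c != set0.
  by apply/set0Pn; case/set0Pn: dn => j jd; exists j; exact: (subsetP sdc).
exact: mp (DAx S (A7 cn dn sdc)) h.
Qed.

Definition W n (i : 'I_n) : formula n := FBot (~: [set i]).
Definition lit n (b : bool) (p : formula n) := if b then sneg p else p.

Lemma NW1 n S (i : 'I_n) (x : {set 'I_n}) (p : formula n) : derives S (W i) -> i \notin x ->
  derives S (FImp p (negc x p)) /\ derives S (FImp (negc x p) p).
Proof.
move=> hW ix; case: (eqVneq x set0) => [->|xn]; first by rewrite negc0; split; exact: imp_refl.
have sx : x \subset ~: [set i].
  by apply/subsetP => j jx; rewrite !inE; apply/eqP => ji; move: ix; rewrite -ji jx.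
have hx : derives S (FBot x) := bot_sub i sx hW.
split; apply: dt.
  exact: mp (mp (a4' _ _ _) (hyp _ _)) (wk1 _ hx).
have := iff1 (DAx (ext S (negc x p)) (A5 p xn xn)); rewrite cocatK negc0 => h.
apply: (mp h); exact: mp (mp (a4' _ _ _) (hyp _ _)) (wk1 _ hx).
Qed.

Lemma NW n S (i : 'I_n) (x : {set 'I_n}) (p : formula n) : derives S (W i) ->
  derives S (FImp (negc x p) (lit (i \in x) p)) /\
  derives S (FImp (lit (i \in x) p) (negc x p)).
Proof.
move=> hW; rewrite /lit; case: ifP => ix; last first.
  by case: (NW1 p hW (negbT ix)).
case: (eqVneq (~: x) set0) => [xT|yn].
  have -> : x = setT by apply/setP => j; move/setP: xT => /(_ j); rewrite !inE => /negbFE.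
  by split; exact: imp_refl.
have iy : i \notin ~: x by rewrite inE ix.
case: (NW1 (negc x p) hW iy) => h1 h2.
have xn : x != set0 by apply/set0Pn; exists i.
have h := DAx S (A5 p yn xn); rewrite cocatCT in h.
split; apply: dt.
  exact: mp (wk1 _ (iff1 h)) (mp (wk1 _ h1) (hyp _ _)).
exact: mp (wk1 _ h2) (mp (wk1 _ (iff2 h)) (hyp _ _)).
Qed.

Lemma worlds n (i0 : 'I_n) S (chi : formula n) :
  (forall i, derives S (FImp (W i) chi)) -> derives S chi.
Proof.
move=> hW.
pose U k := FBot (~: [set j : 'I_n | j < k]).
have step : forall k, derives S (FImp (U k) chi).
  elim=> [|k IH].
    have -> : U 0 = FBot setT by rewrite /U; congr FBot; apply/setP => j; rewrite !inE.
    apply: dt; exact: (exfalso i0 _ (@hyp _ S (FBot setT))).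
  case: (ltnP k n) => kn; last first.
    have -> : U k.+1 = U k; last exact: IH.
    rewrite /U; congr FBot; apply/setP => j; rewrite !inE.
    have jk : j < k := leq_trans (ltn_ord j) kn.
    by rewrite ltnS (ltnW jk) jk.
  pose j0 := Ordinal kn.
  pose c := ~: [set j : 'I_n | j < k.+1].
  rewrite /U -/c; apply: dt.
  apply: (@cases _ _ (W j0)); first exact: wk1 (hW j0).
  apply: dt.
  apply: (mp (wk1 _ (wk1 _ IH))).
  have E : cocat [set j0] c = ~: [set j : 'I_n | j < k].
    apply/setP => j; rewrite !inE ltnS.
    have -> : (j == j0) = (val j == k) by [].
    by case: ltngtP.
  have hj : derives (ext (ext S (FBot c)) (sneg (W j0))) (FBot [set j0]).
    case: (eqVneq (~: [set j0]) set0) => [e|ne].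
      apply: (@efq _ _ (W j0) _ (hyp _ _)); rewrite /W e; exact: top i0 _.
    have := iff1 (DAx (ext (ext S (FBot c)) (sneg (W j0))) (A6 (setT_n0 i0) ne)).
    rewrite cocatTC setCK => h; exact: (mp h (hyp _ _)).
  rewrite /U -E.
  case: (eqVneq c set0) => [c0|cn].
    by have -> : cocat [set j0] c = [set j0] by rewrite c0 cocat0r.
  have j0n : [set j0] != set0 by apply/set0Pn; exists j0; rewrite inE.
  apply: (mp (iff1 (DAx _ (A6 j0n cn)))).
  exact: mp (mp (a4' _ _ _) (wk1 _ (hyp _ _))) hj.
have := step n.
have -> : U n = FBot set0.
  by rewrite /U; congr FBot; apply/setP => j; rewrite !inE ltn_ord.
move=> h; exact: mp h (top i0 S).
Qed.

Theorem mainTheorem13 :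
  forall (n : nat), 0 < n ->
  forall (v : valuation n) (cs : {set 'I_n}), cs != set0 ->
  forall (phi psi : formula n),
    derives (fun chi => chi = vpow v phi) (vpow v (negc cs phi)) /\
    derives (fun chi => chi = vpow v phi \/ chi = vpow v psi)
            (vpow v (FImp phi psi)).
Proof.
move=> n hn v cs csn phi psi; pose i0 := Ordinal hn.
split.
- apply: (worlds i0) => i; apply: dt.
  have hW : derives (ext (fun chi => chi = vpow v phi) (W i)) (W i) := hyp _ _.
  have hA : derives (ext (fun chi => chi = vpow v phi) (W i)) (vpow v phi).
    by apply: DHyp; left.
  have hA' := mp (NW (cont_chain v phi) phi hW).1 hA.
  apply: (mp (NW _ _ hW).2).
  have [h1 h2] := NW cs phi hW.
  move: hA' h1 h2; rewrite /lit /cont_chain !inE eval_negc.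
  case: (i \in cs); case: (eval v i phi) => /= hA' h1 h2.
  + exact: (mp (cntr h1) (dneg_i hA')).
  + exact: (mp h2 hA').
  + exact: (mp h2 hA').
  + exact: (mp (cntr h1) hA').
- apply: (worlds i0) => i; apply: dt.
  set Sg := (fun chi => chi = vpow v phi \/ chi = vpow v psi).
  have hW : derives (ext Sg (W i)) (W i) := hyp _ _.
  have hA : derives (ext Sg (W i)) (vpow v phi) by apply: DHyp; left; left.
  have hB : derives (ext Sg (W i)) (vpow v psi) by apply: DHyp; left; right.
  have hA' := mp (NW (cont_chain v phi) phi hW).1 hA.
  have hB' := mp (NW (cont_chain v psi) psi hW).1 hB.
  apply: (mp (NW _ _ hW).2).
  move: hA' hB'; rewrite /lit /cont_chain !inE /=.
  case: (eval v i phi); case: (eval v i psi) => /= hA' hB'.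
  + exact: (mp (a1 _ _ _) hB').
  + exact: negimp hA' hB'.
  + apply: dt; exact: efq (wk1 _ hA') (hyp _ _).
  + apply: dt; exact: efq (wk1 _ hA') (hyp _ _).
Qed.
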